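(* In the simply typed distributive $\lambda$-calculus, if $\Gamma\vdash t:A$ and $t\to_{\mathsf{dist}} s$, then $\Gamma\vdash s:A$.
   Context: Terms: $t,s,u ::= x \mid \lambda x.t \mid ts \mid \langle t,s\rangle \mid \pi_1 t \mid \pi_2 t$ (up to $\alpha$-renaming); $t\{x:=s\}$ is capture-avoiding substitution. Top-level rules: $(\lambda x.t)s \mapsto t\{x:=s\}$; $\pi_i\langle t_1,t_2\rangle \mapsto t_i$ ($i=1,2$); $\langle t,s\rangle u \mapsto \langle tu, su\rangle$; $\pi_i(\lambda x.t)\mapsto \lambda x.\pi_i t$ ($i=1,2$); $\to_{\mathsf{dist}}$ is the closure of these rules under all term constructors. Types: $A ::= \tau \mid A\Rightarrow A \mid A\wedge A$ with $\tau$ a single atomic type. The relation $\equiv$ on types is the smallest equivalence relation containing $A\Rightarrow (B\wedge C)\equiv (A\Rightarrow B)\wedge(A\Rightarrow C)$ for all $A,B,C$ and closed under congruence for $\Rightarrow$ and $\wedge$ in both arguments. Typing rules: $\Gamma,x:A\vdash x:A$; if $\Gamma\vdash t:A$ and $A\equiv B$ then $\Gamma\vdash t:B$; if $\Gamma,x:A\vdash t:B$ then $\Gamma\vdash \lambda x.t:A\Rightarrow B$; if $\Gamma\vdash t:A\Rightarrow B$ and $\Gamma\vdash s:A$ then $\Gamma\vdash ts:B$; if $\Gamma\vdash t:A$ and $\Gamma\vdash s:B$ then $\Gamma\vdash\langle t,s\rangle:A\wedge B$; if $\Gamma\vdash t:A\wedge B$ then $\Gamma\vdash\pi_1 t:A$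 and $\Gamma\vdash \pi_2 t:B$. *)

(* Defs.v *)
(* Simply typed distributive lambda-calculus.
   Terms are represented with de Bruijn indices, so terms are identified up to
   alpha-renaming and substitution is capture-avoiding by construction. *)
From Stdlib Require Import List Arith.
Import ListNotations.

Inductive term : Type :=
| Var : nat -> term
| Lam : term -> term
| App : term -> term -> term
| Pair : term -> term -> term
| Proj1 : term -> term
| Proj2 : term -> term.

Fixpoint lift (k c : nat) (t : term) : term :=
  match t with
  | Var n => if Nat.ltb n c then Var n else Var (n + k)
  | Lam t => Lam (lift k (S c) t)
  | App t s => App (lift k c t) (lift k c s)
  | Pair t s => Pair (lift k c t) (lift k c s)
  | Proj1 t => Proj1 (lift k c t)
  | Proj2 t => Proj2 (lift k c t)
  end.

(* subst j s t : substitute s for index j in t, decrementing indices > j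
   (the binder being eliminated). *)
Fixpoint subst (j : nat) (s : term) (t : term) : term :=
  match t with
  | Var n =>
      if Nat.eqb n j then lift j 0 s
      else if Nat.ltb j n then Var (pred n) else Var n
  | Lam t => Lam (subst (S j) s t)
  | App t1 t2 => App (subst j s t1) (subst j s t2)
  | Pair t1 t2 => Pair (subst j s t1) (subst j s t2)
  | Proj1 t => Proj1 (subst j s t)
  | Proj2 t => Proj2 (subst j s t)
  end.

(* t{x:=s} for the outermost bound variable x (index 0). *)
Definition subst0 (t s : term) : term := subst 0 s t.

Inductive top_step : term -> term -> Prop :=
| ts_beta : forall t s, top_step (App (Lam t) s) (subst0 t s)
| ts_proj1 : forall t1 t2, top_step (Proj1 (Pair t1 t2)) t1
| ts_proj2 : forall t1 t2, top_step (Proj2 (Pair t1 t2)) t2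
| ts_app_pair : forall t s u, top_step (App (Pair t s) u) (Pair (App t u) (App s u))
| ts_proj1_lam : forall t, top_step (Proj1 (Lam t)) (Lam (Proj1 t))
| ts_proj2_lam : forall t, top_step (Proj2 (Lam t)) (Lam (Proj2 t)).

Inductive dist_step : term -> term -> Prop :=
| ds_top : forall t s, top_step t s -> dist_step t s
| ds_lam : forall t t', dist_step t t' -> dist_step (Lam t) (Lam t')
| ds_appl : forall t t' s, dist_step t t' -> dist_step (App t s) (App t' s)
| ds_appr : forall t s s', dist_step s s' -> dist_step (App t s) (App t s')
| ds_pairl : forall t t' s, dist_step t t' -> dist_step (Pair t s) (Pair t' s)
| ds_pairr : forall t s s', dist_step s s' -> dist_step (Pair t s) (Pair t s')
| ds_proj1 : forall t t', dist_step t t' -> dist_step (Proj1 t) (Proj1 t')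
| ds_proj2 : forall t t', dist_step t t' -> dist_step (Proj2 t) (Proj2 t').

Inductive ty : Type :=
| Tau : ty
| Arr : ty -> ty -> ty
| And : ty -> ty -> ty.

Inductive ty_equiv : ty -> ty -> Prop :=
| te_dist : forall A B C, ty_equiv (Arr A (And B C)) (And (Arr A B) (Arr A C))
| te_refl : forall A, ty_equiv A A
| te_sym : forall A B, ty_equiv A B -> ty_equiv B A
| te_trans : forall A B C, ty_equiv A B -> ty_equiv B C -> ty_equiv A C
| te_arr : forall A A' B B', ty_equiv A A' -> ty_equiv B B' ->
    ty_equiv (Arr A B) (Arr A' B')
| te_and : forall A A' B B', ty_equiv A A' -> ty_equiv B B' ->
    ty_equiv (And A B) (And A' B').

(* Contexts: list of types, index 0 = most recently bound variable. *)
Definition ctx := list ty.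

Inductive typing : ctx -> term -> ty -> Prop :=
| ty_var : forall G n A, nth_error G n = Some A -> typing G (Var n) A
| ty_equivr : forall G t A B, typing G t A -> ty_equiv A B -> typing G t B
| ty_lam : forall G t A B, typing (A :: G) t B -> typing G (Lam t) (Arr A B)
| ty_app : forall G t s A B, typing G t (Arr A B) -> typing G s A ->
    typing G (App t s) B
| ty_pair : forall G t s A B, typing G t A -> typing G s B ->
    typing G (Pair t s) (And A B)
| ty_proj1 : forall G t A B, typing G t (And A B) -> typing G (Proj1 t) A
| ty_proj2 : forall G t A B, typing G t (And A B) -> typing G (Proj2 t) B.

(* Main.v *)
Require Import Defs.
From Stdlib Require Import List Arith Lia.
Import ListNotations.

Fixpoint distr (X Y : ty) : ty :=
  match Y with
  | And P Q => And (distr X P) (distr X Q)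
  | _ => Arr X Y
  end.

Fixpoint nf (A : ty) : ty :=
  match A with
  | Tau => Tau
  | And A B => And (nf A) (nf B)
  | Arr A B => distr (nf A) (nf B)
  end.

Lemma distr_equiv : forall Y X, ty_equiv (Arr X Y) (distr X Y).
Proof.
  induction Y; intros X; simpl; try apply te_refl.
  eapply te_trans. apply te_dist. apply te_and; auto.
Qed.

Lemma nf_equiv : forall A, ty_equiv A (nf A).
Proof.
  induction A; simpl.
  - apply te_refl.
  - eapply te_trans. apply te_arr; eauto. apply distr_equiv.
  - apply te_and; auto.
Qed.

Lemma nf_sound : forall A B, ty_equiv A B -> nf A = nf B.
Proof.
  induction 1; simpl; congruence.
Qed.

Lemma nf_complete : forall A B, nf A = nf B -> ty_equiv A B.
Proof.
  intros A B H. eapply te_trans. apply nf_equiv. rewrite H. apply te_sym, nf_equiv.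
Qed.

Lemma nf_idem : forall A, nf (nf A) = nf A.
Proof. intros. apply nf_sound. apply te_sym, nf_equiv. Qed.

Lemma distr_inj : forall b a a' b', distr a b = distr a' b' -> a = a' /\ b = b'.
Proof.
  induction b; intros a a' b' H; destruct b'; simpl in H; try discriminate;
    try (inversion H; subst; auto; fail).
  inversion H. apply IHb1 in H1. apply IHb2 in H2. intuition congruence.
Qed.

Lemma arr_inj : forall A B A' B', ty_equiv (Arr A B) (Arr A' B') ->
  ty_equiv A A' /\ ty_equiv B B'.
Proof.
  intros. apply nf_sound in H. simpl in H. apply distr_inj in H.
  destruct H; split; apply nf_complete; auto.
Qed.

Lemma and_inj : forall A B A' B', ty_equiv (And A B) (And A' B') ->
  ty_equiv A A' /\ ty_equiv B B'.
Proof.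
  intros. apply nf_sound in H. simpl in H. inversion H.
  split; apply nf_complete; auto.
Qed.

Lemma distr_split : forall b x p q, distr x b = And p q ->
  exists b1 b2, b = And b1 b2 /\ p = distr x b1 /\ q = distr x b2.
Proof.
  destruct b; simpl; intros; try discriminate. inversion H; subst; eauto.
Qed.

Lemma arr_and : forall X A P Q, ty_equiv (Arr X A) (And P Q) ->
  exists A1 A2, ty_equiv A (And A1 A2) /\ ty_equiv P (Arr X A1) /\ ty_equiv Q (Arr X A2).
Proof.
  intros. apply nf_sound in H. simpl in H.
  destruct (distr_split _ _ _ _ H) as (b1 & b2 & E & E1 & E2).
  assert (Hn : nf (And b1 b2) = And b1 b2) by (rewrite <- E; apply nf_idem).
  simpl in Hn. inversion Hn.
  exists b1, b2. repeat split.
  - rewrite <- E. apply nf_equiv.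
  - apply nf_complete. simpl. rewrite H1. auto.
  - apply nf_complete. simpl. rewrite H2. auto.
Qed.

Lemma lam_inv : forall G u T, typing G u T -> forall t, u = Lam t ->
  exists B C, typing (B :: G) t C /\ ty_equiv (Arr B C) T.
Proof.
  induction 1; intros; try discriminate.
  - destruct (IHtyping _ H1) as (B' & C & H2 & H3). exists B', C. split; auto.
    eapply te_trans; eauto.
  - inversion H0; subst. exists A, B. split; auto. apply te_refl.
Qed.

Lemma pair_inv : forall G u T, typing G u T -> forall t s, u = Pair t s ->
  exists A B, typing G t A /\ typing G s B /\ ty_equiv (And A B) T.
Proof.
  induction 1; intros; try discriminate.
  - destruct (IHtyping _ _ H1) as (A' & B' & H2 & H3 & H4). exists A', B'.
    repeat split; auto. eapply te_trans; eauto.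
  - inversion H1; subst. exists A, B. repeat split; auto. apply te_refl.
Qed.

Lemma weakening : forall G0 t A, typing G0 t A -> forall G1 G D, G0 = G1 ++ G ->
  typing (G1 ++ D ++ G) (lift (length D) (length G1) t) A.
Proof.
  induction 1; intros G1 G' D E; subst; simpl.
  - destruct (Nat.ltb_spec n (length G1)); apply ty_var.
    + rewrite nth_error_app1 by auto. rewrite nth_error_app1 in H by auto. auto.
    + rewrite nth_error_app2 in H by auto.
      rewrite nth_error_app2 by lia. rewrite nth_error_app2 by lia.
      replace (n + length D - length G1 - length D) with (n - length G1) by lia. auto.
  - eapply ty_equivr; eauto.
  - apply ty_lam. apply (IHtyping (A :: G1)). auto.
  - eapply ty_app; eauto.
  - apply ty_pair; eauto.
  - eapply ty_proj1; eauto.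
  - eapply ty_proj2; eauto.
Qed.

Lemma substitution : forall G0 t A, typing G0 t A -> forall G1 B G s, G0 = G1 ++ B :: G ->
  typing G s B -> typing (G1 ++ G) (subst (length G1) s t) A.
Proof.
  induction 1; intros G1 B' G' s0 E Hs; subst; simpl.
  - destruct (Nat.eqb_spec n (length G1)).
    + subst. rewrite nth_error_app2 in H by lia. rewrite Nat.sub_diag in H.
      simpl in H. inversion H; subst.
      pose proof (weakening _ _ _ Hs [] G' G1 eq_refl) as W. simpl in W. exact W.
    + destruct (Nat.ltb_spec (length G1) n).
      * apply ty_var. rewrite nth_error_app2 in H by lia.
        rewrite nth_error_app2 by lia.
        destruct (n - length G1) eqn:Hd; [lia|]. simpl in H.
        assert (Hp : Init.Nat.pred n - length G1 = n1) by lia. rewrite Hp. auto.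
      * apply ty_var. rewrite nth_error_app1 in H by lia.
        rewrite nth_error_app1 by lia. auto.
  - eapply ty_equivr; eauto.
  - apply ty_lam. apply (IHtyping (A :: G1) B' G'); auto.
  - eapply ty_app; eauto.
  - apply ty_pair; eauto.
  - eapply ty_proj1; eauto.
  - eapply ty_proj2; eauto.
Qed.

Lemma subst0_typing : forall G t s A B, typing (B :: G) t A -> typing G s B ->
  typing G (subst0 t s) A.
Proof.
  intros. apply (substitution _ _ _ H [] B G s eq_refl H0).
Qed.

Theorem theorem3 : forall (G : ctx) (t s : term) (A : ty),
  typing G t A -> dist_step t s -> typing G s A.
Proof.
  intros G t s A H. revert s. induction H; intros s0 Hs.
  - inversion Hs; subst. inversion H0.
  - eapply ty_equivr; eauto.
  - inversion Hs; subst.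
    + inversion H0.
    + apply ty_lam. auto.
  - inversion Hs; subst.
    + inversion H1; subst.
      * destruct (lam_inv _ _ _ H _ eq_refl) as (B' & C & Ht & He).
        apply arr_inj in He. destruct He as [E1 E2].
        eapply ty_equivr; [|exact E2]. eapply subst0_typing; eauto.
        eapply ty_equivr; eauto. apply te_sym; auto.
      * destruct (pair_inv _ _ _ H _ _ eq_refl) as (P & Q & Ht & Hs' & He).
        apply te_sym in He. destruct (arr_and _ _ _ _ He) as (A1 & A2 & E & E1 & E2).
        eapply ty_equivr; [|apply te_sym; exact E]. apply ty_pair.
        -- eapply ty_app; eauto. eapply ty_equivr; eauto.
        -- eapply ty_app; eauto. eapply ty_equivr; eauto.
    + eapply ty_app; eauto.
    + eapply ty_app; eauto.
  - inversion Hs; subst.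
    + inversion H1.
    + apply ty_pair; auto.
    + apply ty_pair; auto.
  - inversion Hs; subst.
    + inversion H0; subst.
      * destruct (pair_inv _ _ _ H _ _ eq_refl) as (P & Q & Ht & Hs' & He).
        apply and_inj in He. destruct He. eapply ty_equivr; eauto.
      * destruct (lam_inv _ _ _ H _ eq_refl) as (X & C & Ht & He).
        destruct (arr_and _ _ _ _ He) as (A1 & A2 & E & E1 & E2).
        eapply ty_equivr; [|apply te_sym; exact E1]. apply ty_lam.
        eapply ty_proj1. eapply ty_equivr; eauto.
    + eapply ty_proj1; eauto.
  - inversion Hs; subst.
    + inversion H0; subst.
      * destruct (pair_inv _ _ _ H _ _ eq_refl) as (P & Q & Ht & Hs' & He).
        apply and_inj in He. destruct He. eapply ty_equivr; eauto.
      * destruct (lam_inv _ _ _ H _ eq_refl) as (X & C & Ht & He).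
        destruct (arr_and _ _ _ _ He) as (A1 & A2 & E & E1 & E2).
        eapply ty_equivr; [|apply te_sym; exact E2]. apply ty_lam.
        eapply ty_proj2. eapply ty_equivr; eauto.
    + eapply ty_proj2; eauto.
Qed.
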